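(* Consider the differential equation \[ \frac{d}{dt}\left(\frac{\cos x}{1-\dot{x}}\right) = -\sin x, \qquad\text{equivalently}\qquad \frac{\cos x}{(1-\dot{x})^2}\,\ddot{x} - \frac{\sin x}{1-\dot{x}}\,\dot{x} = -\sin x, \] for a real function $x=x(t)$, with initial conditions $x(0)=a$, $\dot{x}(0)=b$, where $a,b\in\mathbb{R}$ satisfy \[ |a|<\pi/2,\qquad b\neq \tfrac12,\qquad b\neq 1,\qquad |a|+|b|>0 . \] Put $c=\dfrac{(2b-1)\cos^2 a}{(1-b)^2}$, $A=\sin 2a$ and $B=2b-1+\cos 2a$. Then the initial value problem has a smooth solution $x:\mathbb{R}\to\mathbb{R}$ given in explicit form. This solution satisfies \[ \tan x(t)=\frac{A\cos t+B\sin t}{2(1-b)+B\cos t-A\sin t} \] wherever the right-hand side is defined, and \[ \dot{x}(t)=\frac12+\frac{2(2b-1)\cos^2 a}{A^2+B^2+4(1-b)(B\cos t-A\sin t)+4(1-b)^2}. \] It satisfies the differential equation at every $t$ with $\cos x(t)\neq 0$ and $\dot{x}(t)\neq 1$. Moreover: 1. The solution $x$ is periodic if and only if $b<\tfrac12$. In that case its orbit in the phase plane (the $(x,\dot{x})$-plane) is a periodic orbit surrounding the origin, symmetric with respect to the $\dot{x}$-axis. 2. Suppose $b>\tfrac12$. Let $\{t_j\}_{j\in\mathbb{Z}}$ be the strictly increasing enumeration of the real roots of the trigonometric equation $B\cos t-A\sin t=2(b-1)$, indexed so that $t_0$ is the smallest positive root. Then: - for every $j\in\mathbb{Z}$, $x(t_j)$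 is an odd integer multiple of $\pi/2$ and $\dot{x}(t_j)=1$; - at each $t_j$, the differential equation and the energy relation \[ (\cos^2 x)\,\frac{2\dot{x}-1}{(1-\dot{x})^2}=c \] hold in the sense of the limit $t\to t_j$; - the orbit in the phase plane oscillates about the line $\dot{x}=1$ within the strip \[ \frac{\sqrt{1+c}}{\sqrt{1+c}+1}\le \dot{x}\le \frac{\sqrt{1+c}}{\sqrt{1+c}-1}, \] and it crosses the line $\dot{x}=1$ exactly at the times $t=t_j$, $j\in\mathbb{Z}$.
   Context: The phase plane is the $(x,\dot{x})$-plane. Points where $\cos x=0$ or $\dot{x}=1$ are singular points of the equation: there the coefficient of $\ddot{x}$ vanishes or becomes unbounded. The constant $c$ is the value of the ''energy'' $(\cos^2 x)(2\dot{x}-1)/(1-\dot{x})^2$ at $t=0$. This energy is conserved along solutions away from the singular points. *)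

(* Defs.v *)
From Stdlib Require Import Reals ZArith.
From Coquelicot Require Import Coquelicot.
Open Scope R_scope.

Definition smooth (f : R -> R) : Prop := forall (n : nat) (t : R), ex_derive_n f n t.

Definition periodic (f : R -> R) : Prop :=
  exists T : R, 0 < T /\ forall t : R, f (t + T) = f t.

Definition phase_orbit (x : R -> R) (p : R * R) : Prop :=
  exists t : R, p = (x t, Derive x t).

(* S surrounds the origin: the origin is not on S and lies in a bounded
   component of the complement of S, i.e. every continuous path starting at
   the origin and reaching far enough away meets S. *)
Definition surrounds_origin (S : R * R -> Prop) : Prop :=
  ~ S (0, 0) /\
  exists M : R, forall g1 g2 : R -> R,
    (forall s, 0 <= s <= 1 -> continuous g1 s /\ continuous g2 s) ->
    g1 0 = 0 -> g2 0 = 0 ->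
    M <= (g1 1) ^ 2 + (g2 1) ^ 2 ->
    exists s, 0 <= s <= 1 /\ S (g1 s, g2 s).

Definition symmetric_wrt_vaxis (S : R * R -> Prop) : Prop :=
  forall p q : R, S (p, q) -> S (- p, q).

Definition energy (x : R -> R) (t : R) : R :=
  (cos (x t)) ^ 2 * (2 * Derive x t - 1) / (1 - Derive x t) ^ 2.

Definition ode_lhs (x : R -> R) (t : R) : R :=
  cos (x t) / (1 - Derive x t) ^ 2 * Derive (Derive x) t
  - sin (x t) / (1 - Derive x t) * Derive x t.

Definition root_enumeration (A B b : R) (tj : Z -> R) : Prop :=
  (forall i j : Z, (i < j)%Z -> tj i < tj j) /\
  (forall t : R, B * cos t - A * sin t = 2 * (b - 1) <-> exists j : Z, t = tj j) /\
  0 < tj 0%Z /\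
  (forall t : R, B * cos t - A * sin t = 2 * (b - 1) -> 0 < t -> tj 0%Z <= t).

(* Main.v *)
Require Import Defs.
From Stdlib Require Import Reals ZArith Lra Lia.
From Coquelicot Require Import Coquelicot.
Open Scope R_scope.

Definition ksm (n:nat) (f:R->R) := forall m t, (m <= n)%nat -> ex_derive_n f m t.

Lemma Derive_n_S f n t : Derive_n (Derive f) n t = Derive_n f (S n) t.
Proof.
  revert t; induction n as [|n IH]; intro t; [reflexivity|].
  simpl. apply Derive_ext. intro; apply IH.
Qed.

Lemma ksm_S n f : (forall t, ex_derive f t) -> ksm n (Derive f) -> ksm (S n) f.
Proof.
  intros H1 H2 m t Hm. destruct m as [|m]; [exact I|].
  destruct m as [|m]; [exact (H1 t)|].
  simpl. apply ex_derive_ext with (f := Derive_n (Derive f) m).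
  - intro; apply Derive_n_S.
  - apply (H2 (S m) t). lia.
Qed.

Lemma ksm_S_inv n f : ksm (S n) f -> (forall t, ex_derive f t) /\ ksm n (Derive f).
Proof.
  intros H. split.
  - intro t. exact (H 1%nat t ltac:(lia)).
  - intros m t Hm. destruct m as [|m]; [exact I|].
    simpl. apply ex_derive_ext with (f := Derive_n f (S m)).
    + intro; symmetry; apply Derive_n_S.
    + apply (H (S (S m)) t). lia.
Qed.

Lemma ksm_0 f : ksm 0 f.
Proof. intros m t Hm. assert (m = 0%nat) by lia. subst. exact I. Qed.

Lemma ksm_ext n f g : (forall t, f t = g t) -> ksm n f -> ksm n g.
Proof. intros He H m t Hm. apply ex_derive_n_ext with f; auto. Qed.

Lemma ksm_le n m f : (m <= n)%nat -> ksm n f -> ksm m f.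
Proof. intros Hmn H k t Hk. apply H. lia. Qed.

Lemma ksm_plus n : forall f g, ksm n f -> ksm n g -> ksm n (fun t => f t + g t).
Proof.
  induction n as [|n IH]; intros f g Hf Hg; [apply ksm_0|].
  destruct (ksm_S_inv _ _ Hf) as [Df Hf'].
  destruct (ksm_S_inv _ _ Hg) as [Dg Hg'].
  apply ksm_S.
  - intro t. apply (ex_derive_plus f g); auto.
  - apply ksm_ext with (fun t => Derive f t + Derive g t).
    + intro t. symmetry. apply Derive_plus; auto.
    + apply IH; auto.
Qed.



Lemma ksm_const n : forall c, ksm n (fun _ => c).
Proof.
  induction n as [|n IH]; intro c; [apply ksm_0|].
  apply ksm_S.
  - intro; apply ex_derive_const.
  - apply ksm_ext with (fun _ => 0). intro; symmetry; apply Derive_const.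
    apply IH.
Qed.

Lemma ksm_mult n : forall f g, ksm n f -> ksm n g -> ksm n (fun t => f t * g t).
Proof.
  induction n as [|n IH]; intros f g Hf Hg; [apply ksm_0|].
  destruct (ksm_S_inv _ _ Hf) as [Df Hf'].
  destruct (ksm_S_inv _ _ Hg) as [Dg Hg'].
  apply ksm_S.
  - intro t. apply ex_derive_mult; auto.
  - apply ksm_ext with (fun t => Derive f t * g t + f t * Derive g t).
    + intro t. symmetry. apply Derive_mult; auto.
    + apply ksm_plus; apply IH; auto; apply ksm_le with (S n); auto.
Qed.

Lemma ksm_scal n c f : ksm n f -> ksm n (fun t => c * f t).
Proof. intros; apply ksm_mult; auto; apply ksm_const. Qed.

Lemma ksm_inv n : forall f, (forall t, f t <> 0) -> ksm n f -> ksm n (fun t => / f t).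
Proof.
  induction n as [|n IH]; intros f Hnz Hf; [apply ksm_0|].
  destruct (ksm_S_inv _ _ Hf) as [Df Hf'].
  apply ksm_S.
  - intro t. apply ex_derive_inv; auto.
  - apply ksm_ext with (fun t => (-1) * (Derive f t * ((/ f t) * (/ f t)))).
    + intro t. rewrite Derive_inv; auto. field. auto.
    + apply ksm_scal. apply ksm_mult; auto.
      assert (ksm n (fun t => / f t)) by (apply IH; auto; apply ksm_le with (S n); auto).
      apply ksm_mult; auto.
Qed.

Lemma ksm_cos_sin n : ksm n cos /\ ksm n sin.
Proof.
  induction n as [|n [IHc IHs]]; [split; apply ksm_0|].
  split; apply ksm_S.
  - intro t. eexists. apply is_derive_cos.
  - apply ksm_ext with (fun t => (-1) * sin t).
    + intro t. rewrite (is_derive_unique _ _ _ (is_derive_cos t)). ring.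
    + apply ksm_scal; auto.
  - intro t. eexists. apply is_derive_sin.
  - apply ksm_ext with cos; [|auto].
    intro t. rewrite (is_derive_unique _ _ _ (is_derive_sin t)). ring.
Qed.

Lemma smooth_of_ksm f : (forall n, ksm n f) -> forall n t, ex_derive_n f n t.
Proof. intros H n t. apply (H n). lia. Qed.

Definition uu A B t := B * cos t - A * sin t.
Definition NN A B t := A * cos t + B * sin t.
Definition DD A B k t := A^2 + B^2 + 2*k*uu A B t + k^2.
Definition vv A B k K t := 1/2 + K / DD A B k t.

Lemma uN_sq A B t : (uu A B t)^2 + (NN A B t)^2 = A^2 + B^2.
Proof.
  unfold uu, NN. pose proof (sin2_cos2 t). unfold Rsqr in H. nra.
Qed.

Lemma DD_eq A B k t : DD A B k t = (k + uu A B t)^2 + (NN A B t)^2.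
Proof. unfold DD. pose proof (uN_sq A B t). nra. Qed.

Lemma DD_pos A B k K t : A^2+B^2 = k^2 + 2*K -> K <> 0 -> 0 < DD A B k t.
Proof.
  intros HR HK. rewrite DD_eq.
  pose proof (uN_sq A B t).
  destruct (Req_dec (k + uu A B t) 0) as [E|E].
  - destruct (Req_dec (NN A B t) 0) as [E2|E2].
    + exfalso. apply HK. assert (uu A B t = - k) by lra. rewrite H0, E2 in H. nra.
    + nra.
  - nra.
Qed.

Lemma is_derive_uu A B t : is_derive (uu A B) t (- NN A B t).
Proof. unfold uu, NN. auto_derive; auto. ring. Qed.
Lemma is_derive_NN A B t : is_derive (NN A B) t (uu A B t).
Proof. unfold uu, NN. auto_derive; auto. ring. Qed.
Lemma is_derive_DD A B k t : is_derive (DD A B k) t (- 2 * k * NN A B t).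
Proof. unfold DD, uu, NN. auto_derive; auto. ring. Qed.

Lemma is_derive_vv A B k K t : A^2+B^2 = k^2 + 2*K -> K <> 0 ->
  is_derive (vv A B k K) t (2 * k * K * NN A B t / (DD A B k t)^2).
Proof.
  intros HR HK. pose proof (DD_pos A B k K t HR HK) as HD.
  unfold vv. revert HD. unfold DD, uu, NN. intro HD.
  auto_derive. lra. field. lra.
Qed.

Lemma ksm_vv n A B k K : A^2+B^2 = k^2 + 2*K -> K <> 0 -> ksm n (vv A B k K).
Proof.
  intros HR HK. destruct (ksm_cos_sin n) as [Hc Hs].
  unfold vv.
  apply ksm_plus. apply ksm_const.
  apply ksm_mult. apply ksm_const.
  apply ksm_inv. intro t. apply Rgt_not_eq, (DD_pos A B k K t HR HK).
  unfold DD, uu.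
  apply ksm_plus. apply ksm_plus. apply ksm_const.
  apply ksm_scal. apply ksm_plus. apply ksm_scal; auto.
  apply ksm_ext with (fun t => (-A) * sin t). intro; ring. apply ksm_scal; auto.
  apply ksm_const.
Qed.

Lemma cont_vv A B k K t : A^2+B^2 = k^2 + 2*K -> K <> 0 -> continuous (vv A B k K) t.
Proof.
  intros HR HK. apply (ex_derive_continuous (K:=R_AbsRing) (V:=R_NormedModule)). eexists. apply is_derive_vv; auto.
Qed.

Definition xx a A B k K t := a + RInt (vv A B k K) 0 t.

Lemma is_derive_xx a A B k K t : A^2+B^2 = k^2 + 2*K -> K <> 0 ->
  is_derive (xx a A B k K) t (vv A B k K t).
Proof.
  intros HR HK. unfold xx.
  evar (l:R). replace (vv A B k K t) with l.
  apply @is_derive_plus. apply is_derive_const.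
  apply is_derive_RInt with (a := 0).
  apply filter_forall. intro y. apply (RInt_correct (V:=R_CompleteNormedModule)). apply (ex_RInt_continuous (V:=R_CompleteNormedModule)).
  intros; apply cont_vv; auto.
  apply cont_vv; auto.
  unfold l. simpl. unfold plus, zero; simpl. ring.
Qed.

Lemma Derive_xx a A B k K t : A^2+B^2 = k^2 + 2*K -> K <> 0 ->
  Derive (xx a A B k K) t = vv A B k K t.
Proof. intros. apply is_derive_unique, is_derive_xx; auto. Qed.

Lemma smooth_xx a A B k K : A^2+B^2 = k^2 + 2*K -> K <> 0 ->
  forall n t, ex_derive_n (xx a A B k K) n t.
Proof.
  intros HR HK. apply smooth_of_ksm. intros [|n]. apply ksm_0.
  apply ksm_S. intro t. eexists. apply is_derive_xx; auto.
  apply ksm_ext with (vv A B k K). intro; symmetry; apply Derive_xx; auto.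
  apply ksm_vv; auto.
Qed.

Lemma xx_0 a A B k K : xx a A B k K 0 = a.
Proof. unfold xx. rewrite RInt_point. unfold zero; simpl. ring. Qed.

Lemma const_of_deriv0 f : (forall t, is_derive f t 0) -> forall t, f t = f 0.
Proof.
  intros H t.
  destruct (MVT_gen f 0 t (fun _ => 0)) as [c [_ Hc]].
  - intros; apply H.
  - intros y _. apply continuity_pt_filterlim.
    apply (ex_derive_continuous (K:=R_AbsRing) (V:=R_NormedModule)). eexists; apply H.
  - lra.
Qed.

Definition qq a A B k K t :=
  sin (xx a A B k K t) * (k + uu A B t) - cos (xx a A B k K t) * NN A B t.

Lemma is_derive_qq a A B k K t : A^2+B^2 = k^2 + 2*K -> K <> 0 ->
  is_derive (qq a A B k K) t
   (cos (xx a A B k K t) * vv A B k K t * (k + uu A B t) + sin (xx a A B k K t) * (- NN A B t)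
    - (- sin (xx a A B k K t) * vv A B k K t * NN A B t + cos (xx a A B k K t) * uu A B t)).
Proof.
  intros HR HK. unfold qq.
  pose proof (is_derive_xx a A B k K t HR HK) as HX.
  assert (HE : ex_derive (fun x : R => xx a A B k K x) t) by (exists (vv A B k K t); exact HX).
  unfold uu, NN. auto_derive. { tauto. }
  replace (Derive (fun x : R => xx a A B k K x) t) with (vv A B k K t).
  ring. symmetry. apply is_derive_unique. exact HX.
Qed.

Lemma alg_q s c U N k K D : D = U^2+N^2+2*k*U+k^2 -> U^2+N^2 = k^2+2*K -> D<>0 ->
 (c*(1/2+K/D)*(k+U) + s*(-N) - (-s*(1/2+K/D)*N + c*U)) * D + k*N*(s*(k+U)-c*N) = 0.
Proof.
  intros HD HK HD0.
  assert (Hv: (1/2 + K/D) * D = D/2 + K) by (field; auto).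
  replace ((c*(1/2+K/D)*(k+U) + s*(-N) - (-s*(1/2+K/D)*N + c*U)) * D + k*N*(s*(k+U)-c*N))
    with ((c*(k+U) + s*N)*((1/2+K/D)*D) - D*(s*N + c*U) + k*N*(s*(k+U)-c*N)) by ring.
  rewrite Hv. assert (K = (U^2+N^2-k^2)/2) by lra. subst K D. field.
Qed.

Lemma qq_zero a A B k K : A^2+B^2 = k^2 + 2*K -> K <> 0 -> qq a A B k K 0 = 0 ->
  forall t, qq a A B k K t = 0.
Proof.
  intros HR HK H0 t.
  set (f := fun t => (qq a A B k K t)^2 / DD A B k t).
  assert (Hf : forall t, is_derive f t 0).
  { intro s. pose proof (is_derive_qq a A B k K s HR HK) as Hq.
    pose proof (is_derive_DD A B k s) as HDD.
    pose proof (DD_pos A B k K s HR HK) as Hp.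
    assert (E1 : ex_derive (fun x => qq a A B k K x) s) by (eexists; exact Hq).
    assert (E2 : ex_derive (fun x => DD A B k x) s) by (eexists; exact HDD).
    unfold f. auto_derive. { repeat split; auto; lra. }
    replace (Derive (fun x => qq a A B k K x) s) with
      (cos (xx a A B k K s) * vv A B k K s * (k + uu A B s) + sin (xx a A B k K s) * (- NN A B s)
    - (- sin (xx a A B k K s) * vv A B k K s * NN A B s + cos (xx a A B k K s) * uu A B s))
      by (symmetry; apply is_derive_unique; exact Hq).
    replace (Derive (fun x => DD A B k x) s) with (- 2 * k * NN A B s)
      by (symmetry; apply is_derive_unique; exact HDD).
    pose proof (alg_q (sin (xx a A B k K s)) (cos (xx a A B k K s)) (uu A B s) (NN A B s) k K (DD A B k s)) as Hal.
    unfold vv. rewrite <- (uN_sq A B s) in HR.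
    specialize (Hal ltac:(unfold DD; rewrite <- (uN_sq A B s); ring) HR ltac:(lra)).
    unfold qq. revert Hal.
    set (Q := (cos (xx a A B k K s) * (1 / 2 + K / DD A B k s) * (k + uu A B s) +
       sin (xx a A B k K s) * - NN A B s -
       (- sin (xx a A B k K s) * (1 / 2 + K / DD A B k s) * NN A B s +
        cos (xx a A B k K s) * uu A B s))).
    set (q := sin (xx a A B k K s) * (k + uu A B s) - cos (xx a A B k K s) * NN A B s).
    set (D := DD A B k s). set (N := NN A B s). intro Hal.
    replace (1 * Q * ((1 + 1) * (q * 1)) * / D + q * (q * 1) * (- (1 * (-2 * k * N)) * / (D * D)))
      with (2 * q * (Q * D + k * N * q) / (D * D)) by (field; unfold D; lra).
    rewrite Hal. unfold Rdiv. ring. }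
  pose proof (const_of_deriv0 f Hf t) as Ht. unfold f in Ht. rewrite H0 in Ht.
  pose proof (DD_pos A B k K t HR HK).
  assert (qq a A B k K t ^ 2 = 0).
  { apply (Rmult_eq_reg_r (/ DD A B k t)). unfold Rdiv in Ht. rewrite Ht. ring.
    apply Rgt_not_eq, Rlt_gt, Rinv_0_lt_compat; auto. }
  nra.
Qed.


Lemma L_q a A B k K t : A^2+B^2 = k^2 + 2*K -> K <> 0 -> qq a A B k K 0 = 0 ->
  sin (xx a A B k K t) * (k + uu A B t) = cos (xx a A B k K t) * NN A B t.
Proof. intros HR HK H0. pose proof (qq_zero a A B k K HR HK H0 t). unfold qq in H. lra. Qed.

Lemma L_c2 a A B k K t : A^2+B^2 = k^2 + 2*K -> K <> 0 -> qq a A B k K 0 = 0 ->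
  cos (xx a A B k K t) ^2 * DD A B k t = (k + uu A B t)^2.
Proof.
  intros HR HK H0. pose proof (L_q a A B k K t HR HK H0) as Hq.
  rewrite DD_eq. pose proof (sin2_cos2 (xx a A B k K t)) as Hs. unfold Rsqr in Hs.
  set (s := sin (xx a A B k K t)) in *. set (c := cos (xx a A B k K t)) in *.
  set (U := uu A B t) in *. set (N := NN A B t) in *.
  assert (E : c^2 * ((k+U)^2 + N^2) - (k+U)^2 = (c*N - s*(k+U))*(c*N + s*(k+U)) + (k+U)^2*(s*s+c*c-1)) by ring.
  rewrite Hs, Hq in E. lra.
Qed.

Lemma L_1v A B k K t : A^2+B^2 = k^2 + 2*K -> K <> 0 ->
  1 - vv A B k K t = k * (k + uu A B t) / DD A B k t.
Proof.
  intros HR HK. pose proof (DD_pos A B k K t HR HK). unfold vv.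
  field_simplify; [|lra|lra]. unfold DD. rewrite HR. field. unfold DD in H; lra.
Qed.

Lemma L_tan a A B k K t : A^2+B^2 = k^2 + 2*K -> K <> 0 -> qq a A B k K 0 = 0 ->
  k + uu A B t <> 0 ->
  cos (xx a A B k K t) <> 0 /\ tan (xx a A B k K t) = NN A B t / (k + uu A B t).
Proof.
  intros HR HK H0 Hn. pose proof (L_q a A B k K t HR HK H0) as Hq.
  pose proof (sin2_cos2 (xx a A B k K t)) as Hs. unfold Rsqr in Hs.
  assert (Hc : cos (xx a A B k K t) <> 0).
  { intro Hc. rewrite Hc in Hq, Hs. assert (sin (xx a A B k K t) * (k + uu A B t) = 0) by lra.
    apply Rmult_integral in H. destruct H; [|contradiction]. rewrite H in Hs. lra. }
  split; auto. unfold tan.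
  replace (sin (xx a A B k K t) / cos (xx a A B k K t)) with
    (sin (xx a A B k K t) * (k + uu A B t) / (cos (xx a A B k K t) * (k + uu A B t))) by (field; auto).
  rewrite Hq. field; auto.
Qed.

Lemma L_cos0 a A B k K t : A^2+B^2 = k^2 + 2*K -> K <> 0 -> qq a A B k K 0 = 0 ->
  k + uu A B t = 0 -> cos (xx a A B k K t) = 0.
Proof.
  intros HR HK H0 Hn. pose proof (L_q a A B k K t HR HK H0) as Hq.
  pose proof (DD_pos A B k K t HR HK) as HD. rewrite DD_eq, Hn in HD.
  rewrite Hn in Hq. assert (NN A B t <> 0) by (intro E; rewrite E in HD; lra).
  assert (cos (xx a A B k K t) * NN A B t = 0) by lra.
  apply Rmult_integral in H1; destruct H1; auto. contradiction.
Qed.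


Lemma Derive_vv A B k K t : A^2+B^2 = k^2 + 2*K -> K <> 0 ->
  Derive (vv A B k K) t = 2 * k * K * NN A B t / (DD A B k t)^2.
Proof. intros; apply is_derive_unique, is_derive_vv; auto. Qed.

Lemma alg_ode s c N Dn D k K v : D<>0 -> 1-v<>0 -> v = 1/2 + K/D -> 1 - v = k*Dn/D -> s*Dn = c*N ->
  c * (2*k*K*N/D^2) = s * (1-v) * (2*v-1).
Proof.
  intros HD Hv Hvv H1 Hq.
  replace (2*v-1) with (2*K/D) by (rewrite Hvv; field; auto).
  rewrite H1. replace (s * (k * Dn / D) * (2 * K / D)) with (2*k*K*(s*Dn)/D^2) by (field; auto).
  rewrite Hq. field; auto.
Qed.

Lemma alg_fin1 s c v W : 1 - v <> 0 -> c*W = s*(1-v)*(2*v-1) ->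
  1 * v * - s * / (1 + - v) + c * (- - (1 * W) * / ((1 + - v) * (1 + - v))) = - s.
Proof.
  intros H1 H2.
  replace (1 * v * - s * / (1 + - v) + c * (- - (1 * W) * / ((1 + - v) * (1 + - v))))
    with ((c*W - s*v*(1-v))/((1-v)*(1-v))) by (field; lra).
  rewrite H2. field; auto.
Qed.

Lemma alg_fin2 s c v W : 1 - v <> 0 -> c*W = s*(1-v)*(2*v-1) ->
  c / (1 - v)^2 * W - s / (1 - v) * v = - s.
Proof.
  intros H1 H2.
  replace (c / (1 - v)^2 * W - s / (1 - v) * v)
    with ((c*W - s*v*(1-v))/((1-v)*(1-v))) by (field; lra).
  rewrite H2. field; auto.
Qed.

Lemma L_ode a A B k K t : A^2+B^2 = k^2 + 2*K -> K <> 0 -> qq a A B k K 0 = 0 ->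
  Derive (xx a A B k K) t <> 1 ->
  is_derive (fun s => cos (xx a A B k K s) / (1 - Derive (xx a A B k K) s)) t (- sin (xx a A B k K t)) /\
  ode_lhs (xx a A B k K) t = - sin (xx a A B k K t).
Proof.
  intros HR HK H0 Hv1.
  rewrite Derive_xx in Hv1 by auto.
  pose proof (DD_pos A B k K t HR HK) as HD.
  pose proof (alg_ode (sin (xx a A B k K t)) (cos (xx a A B k K t)) (NN A B t) (k + uu A B t) (DD A B k t) k K (vv A B k K t)
     ltac:(lra) ltac:(lra) ltac:(reflexivity) (L_1v A B k K t HR HK) (L_q a A B k K t HR HK H0)) as Hal.
  split.
  - apply is_derive_ext with (fun s => cos (xx a A B k K s) / (1 - vv A B k K s)).
    { intro s. rewrite Derive_xx; auto. }
    pose proof (is_derive_xx a A B k K t HR HK) as HX.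
    pose proof (is_derive_vv A B k K t HR HK) as HV.
    assert (E1 : ex_derive (fun x => xx a A B k K x) t) by (eexists; exact HX).
    assert (E2 : ex_derive (fun x => vv A B k K x) t) by (eexists; exact HV).
    auto_derive. { repeat split; auto. lra. }
    replace (Derive (fun x => xx a A B k K x) t) with (vv A B k K t)
      by (symmetry; apply is_derive_unique; exact HX).
    replace (Derive (fun x => vv A B k K x) t) with (2 * k * K * NN A B t / (DD A B k t)^2)
      by (symmetry; apply is_derive_unique; exact HV).
    revert Hal. 
    set (s := sin (xx a A B k K t)). set (c := cos (xx a A B k K t)).
    set (v := vv A B k K t). set (W := 2 * k * K * NN A B t / (DD A B k t)^2). intro Hal.
    apply alg_fin1; auto. unfold v; lra.
  - unfold ode_lhs.
    rewrite (Derive_ext (Derive (xx a A B k K)) (vv A B k K)) by (intro; apply Derive_xx; auto).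
    rewrite Derive_vv, Derive_xx by auto.
    revert Hal. 
    set (s := sin (xx a A B k K t)). set (c := cos (xx a A B k K t)).
    set (v := vv A B k K t). set (W := 2 * k * K * NN A B t / (DD A B k t)^2). intro Hal.
    apply alg_fin2; auto. unfold v; lra.
Qed.

Lemma L_energy a A B k K t : A^2+B^2 = k^2 + 2*K -> K <> 0 -> qq a A B k K 0 = 0 -> k <> 0 ->
  Derive (xx a A B k K) t <> 1 -> energy (xx a A B k K) t = 2 * K / k^2.
Proof.
  intros HR HK H0 Hk Hv1. unfold energy. rewrite Derive_xx in * by auto.
  pose proof (DD_pos A B k K t HR HK) as HD.
  pose proof (L_1v A B k K t HR HK) as H1.
  pose proof (L_c2 a A B k K t HR HK H0) as Hc.
  assert (Hn : k + uu A B t <> 0).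
  { intro E. rewrite E in H1. apply Hv1. unfold Rdiv in H1. lra. }
  assert (H2 : 2 * vv A B k K t - 1 = 2*K / DD A B k t) by (unfold vv; field; lra).
  rewrite H2, H1.
  set (c := cos (xx a A B k K t)) in *. set (D := DD A B k t) in *. set (U := k + uu A B t) in *.
  replace (c ^ 2 * (2 * K / D) / (k * U / D) ^ 2) with ((c^2 * D) * (2*K) / (k^2 * U^2)) by (field; repeat split; lra).
  rewrite Hc. field. split; auto.
Qed.

Lemma cont_xx a A B k K t : A^2+B^2 = k^2 + 2*K -> K <> 0 -> continuous (xx a A B k K) t.
Proof.
  intros. apply (ex_derive_continuous (K:=R_AbsRing) (V:=R_NormedModule)).
  eexists; apply is_derive_xx; auto.
Qed.

Lemma L_range a A B k K : A^2+B^2 = k^2 + 2*K -> K <> 0 ->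
  - (PI/2) < a < PI/2 -> (forall t, cos (xx a A B k K t) <> 0) ->
  forall t, - (PI/2) < xx a A B k K t < PI/2.
Proof.
  intros HR HK Ha Hc t.
  pose proof (xx_0 a A B k K) as H0.
  destruct (Rlt_le_dec (xx a A B k K t) (PI/2)) as [h1|h1];
  [destruct (Rlt_le_dec (- (PI/2)) (xx a A B k K t)) as [h2|h2]; [lra|]|].
  - destruct (IVT_gen_consistent (xx a A B k K) 0 t (-(PI/2))) as [s [_ Hs]].
    + intro; apply cont_xx; auto.
    + rewrite H0. split; [apply Rle_trans with (xx a A B k K t); [apply Rmin_r|lra]| apply Rle_trans with a; [lra|apply Rmax_l]].
    + exfalso; apply (Hc s). rewrite Hs. rewrite cos_neg. apply cos_PI2.
  - destruct (IVT_gen_consistent (xx a A B k K) 0 t (PI/2)) as [s [_ Hs]].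
    + intro; apply cont_xx; auto.
    + rewrite H0. split; [apply Rle_trans with a; [apply Rmin_l|lra]| apply Rle_trans with (xx a A B k K t); [lra|apply Rmax_r]].
    + exfalso; apply (Hc s). rewrite Hs. apply cos_PI2.
Qed.

Lemma L_mono a A B k K t T : A^2+B^2 = k^2 + 2*K -> 0 < K -> 0 < T ->
  xx a A B k K t < xx a A B k K (t + T).
Proof.
  intros HR HK HT.
  destruct (MVT_gen (xx a A B k K) t (t+T) (vv A B k K)) as [c [_ Hc]].
  - intros; apply is_derive_xx; auto; lra.
  - intros; apply continuity_pt_filterlim, cont_xx; auto; lra.
  - assert (0 < vv A B k K c).
    { unfold vv. pose proof (DD_pos A B k K c HR ltac:(lra)).
      assert (0 < K / DD A B k c) by (apply Rdiv_lt_0_compat; auto). lra. }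
    replace (t + T - t) with T in Hc by ring. nra.
Qed.

Lemma uu_bound A B t : (uu A B t)^2 <= A^2 + B^2.
Proof. pose proof (uN_sq A B t). nra. Qed.

Lemma uu_2PI A B t : uu A B (t + 2*PI) = uu A B t.
Proof. unfold uu. rewrite cos_plus, sin_plus, cos_2PI, sin_2PI. ring. Qed.
Lemma NN_2PI A B t : NN A B (t + 2*PI) = NN A B t.
Proof. unfold NN. rewrite cos_plus, sin_plus, cos_2PI, sin_2PI. ring. Qed.

Lemma L_Dnpos A B k K t : A^2+B^2 = k^2 + 2*K -> K < 0 -> 0 < k -> 0 < k + uu A B t.
Proof. intros HR HK Hk. pose proof (uu_bound A B t). nra. Qed.

Lemma L_period a A B k K : A^2+B^2 = k^2 + 2*K -> K < 0 -> 0 < k -> qq a A B k K 0 = 0 ->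
  - (PI/2) < a < PI/2 -> forall t, xx a A B k K (t + 2*PI) = xx a A B k K t.
Proof.
  intros HR HK Hk H0 Ha t.
  assert (HK' : K <> 0) by lra.
  assert (Hc : forall t, cos (xx a A B k K t) <> 0).
  { intro s. apply (L_tan a A B k K s HR HK' H0). pose proof (L_Dnpos A B k K s HR HK Hk). lra. }
  pose proof (L_range a A B k K HR HK' Ha Hc) as Hr.
  rewrite <- (atan_tan (xx a A B k K (t + 2*PI))) by auto.
  rewrite <- (atan_tan (xx a A B k K t)) by auto.
  f_equal.
  rewrite (proj2 (L_tan a A B k K (t + 2*PI) HR HK' H0 ltac:(pose proof (L_Dnpos A B k K (t+2*PI) HR HK Hk); lra))).
  rewrite (proj2 (L_tan a A B k K t HR HK' H0 ltac:(pose proof (L_Dnpos A B k K t HR HK Hk); lra))).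
  rewrite uu_2PI, NN_2PI. reflexivity.
Qed.

Lemma unit_vec u w : u^2 + w^2 = 1 -> exists s, cos s = u /\ sin s = w.
Proof.
  intros H.
  assert (Hu : -1 <= u <= 1) by nra.
  assert (Hw : sqrt (1 - u²) = Rabs w).
  { rewrite <- sqrt_Rsqr_abs. f_equal. unfold Rsqr. nra. }
  destruct (Rle_dec 0 w) as [hw|hw].
  - exists (acos u). split. apply cos_acos; auto.
    rewrite sin_acos by auto. rewrite Hw. apply Rabs_right; lra.
  - exists (- acos u). split. rewrite cos_neg. apply cos_acos; auto.
    rewrite sin_neg, sin_acos by auto. rewrite Hw. rewrite Rabs_left; lra.
Qed.

Lemma solve_t A B X Y : 0 < A^2+B^2 -> X^2+Y^2 = A^2+B^2 -> exists t, uu A B t = X /\ NN A B t = Y.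
Proof.
  intros HR HXY.
  set (R2 := A^2+B^2) in *.
  destruct (unit_vec ((B*X + A*Y)/R2) ((B*Y - A*X)/R2)) as [t [Hc Hs]].
  { replace (((B*X + A*Y)/R2)^2 + ((B*Y - A*X)/R2)^2) with ((X^2+Y^2)*(A^2+B^2)/(R2*R2))
      by (unfold R2 in *; field; lra).
    rewrite HXY. unfold R2 in *. field. lra. }
  exists t. unfold uu, NN. rewrite Hc, Hs. unfold R2 in *. split; field; lra.
Qed.

Lemma PC_range a A B k K : A^2+B^2 = k^2 + 2*K -> K < 0 -> 0 < k -> qq a A B k K 0 = 0 ->
  - (PI/2) < a < PI/2 -> forall t, - (PI/2) < xx a A B k K t < PI/2.
Proof.
  intros HR HK Hk H0 Ha.
  assert (HK' : K <> 0) by lra.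
  apply L_range; auto.
  intro s. apply (L_tan a A B k K s HR HK' H0). pose proof (L_Dnpos A B k K s HR HK Hk). lra.
Qed.

Lemma PC_atan a A B k K : A^2+B^2 = k^2 + 2*K -> K < 0 -> 0 < k -> qq a A B k K 0 = 0 ->
  - (PI/2) < a < PI/2 -> forall t, xx a A B k K t = atan (NN A B t / (k + uu A B t)).
Proof.
  intros HR HK Hk H0 Ha t.
  assert (HK' : K <> 0) by lra.
  rewrite <- (atan_tan (xx a A B k K t)) by (apply PC_range; auto).
  f_equal. apply (L_tan a A B k K t HR HK' H0). pose proof (L_Dnpos A B k K t HR HK Hk). lra.
Qed.

Lemma vv_uu A B k K s t : uu A B s = uu A B t -> vv A B k K s = vv A B k K t.
Proof. intro H. unfold vv, DD. rewrite H. reflexivity. Qed.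

Lemma PC_sym a A B k K : A^2+B^2 = k^2 + 2*K -> K < 0 -> 0 < k -> qq a A B k K 0 = 0 ->
  - (PI/2) < a < PI/2 -> symmetric_wrt_vaxis (phase_orbit (xx a A B k K)).
Proof.
  intros HR HK Hk H0 Ha p q [t Ht]. injection Ht as Hp Hq. subst p q.
  assert (HK' : K <> 0) by lra.
  destruct (Req_dec (A^2+B^2) 0) as [HZ|HZ].
  - exists t. f_equal.
    assert (A = 0) by nra. assert (B = 0) by nra. subst A B.
    rewrite PC_atan by auto. unfold NN. replace ((0 * cos t + 0 * sin t)) with 0 by ring.
    unfold Rdiv. rewrite Rmult_0_l, atan_0. ring.
  - destruct (solve_t A B (uu A B t) (- NN A B t)) as [s [Hu Hn]].
    { pose proof (Rle_0_sqr A); pose proof (Rle_0_sqr B); unfold Rsqr in *. nra. }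
    { rewrite <- (uN_sq A B t). ring. }
    exists s. rewrite !Derive_xx by auto. rewrite (vv_uu A B k K s t Hu).
    rewrite (PC_atan a A B k K HR HK Hk H0 Ha s), (PC_atan a A B k K HR HK Hk H0 Ha t).
    rewrite Hu, Hn. unfold Rdiv. rewrite Ropp_mult_distr_l_reverse, atan_opp. reflexivity.
Qed.

Definition Rr A B := sqrt (A^2+B^2).
Definition ee k K := -K/k^2.
Definition mm k K := acos (ee k K).
Definition yt A B k K := 1/2 + K/(k + Rr A B + 1)^2.
Definition yb A B k K := 1/2 + K/((k - Rr A B)/2)^2.
Definition HH k K p q := K/(q-1/2) - 2*k*sqrt(K/(q-1/2))*cos p - 2*K.

Lemma Rr_facts A B k K : A^2+B^2 = k^2 + 2*K -> K < 0 -> 0 < k -> 0 < A^2+B^2 ->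
  (Rr A B)^2 = A^2+B^2 /\ 0 < Rr A B < k.
Proof.
  intros HR HK Hk H0. unfold Rr.
  assert (E : sqrt (A^2+B^2) ^2 = A^2+B^2) by (rewrite <- Rsqr_pow2; apply Rsqr_sqrt; lra).
  split; auto. split. apply sqrt_lt_R0; auto.
  assert (0 <= sqrt (A^2+B^2)) by apply sqrt_pos. nra.
Qed.

Lemma mm_facts k K : K < 0 -> 0 < k -> 0 < k^2 + 2*K ->
  0 < mm k K < PI/2 /\ cos (mm k K) = ee k K /\ 0 < ee k K < 1/2.
Proof.
  intros HK Hk H2.
  assert (He : 0 < ee k K < 1/2).
  { unfold ee. split. apply Rdiv_lt_0_compat; nra. 
    apply Rmult_lt_reg_r with (k^2). nra. field_simplify; nra. }
  unfold mm. split; [|split; auto; apply cos_acos; lra].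
  split. apply acos_bound_lt; lra.
  rewrite acos_atan by lra. pose proof (atan_bound (sqrt (1 - (ee k K)²) / ee k K)). lra.
Qed.

Lemma HH_rho k K p q : K < 0 -> q < 1/2 ->
  let rho := sqrt (K/(q-1/2)) in
  0 < rho /\ rho^2 = K/(q-1/2) /\ HH k K p q = rho^2 - 2*k*rho*cos p - 2*K.
Proof.
  intros HK Hq rho.
  assert (Hp : 0 < K/(q-1/2)) by (apply Rdiv_neg_neg; lra).
  assert (E : rho^2 = K/(q-1/2)) by (unfold rho; rewrite <- Rsqr_pow2; apply Rsqr_sqrt; lra).
  split. apply sqrt_lt_R0; auto. split; auto. unfold HH. fold rho. rewrite E. ring.
Qed.

Lemma HH_lb1 k K p q : K < 0 -> 0 < k -> q < 1/2 ->
  (sqrt (K/(q-1/2)) - k)^2 - (k^2+2*K) <= HH k K p q.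
Proof.
  intros HK Hk Hq. destruct (HH_rho k K p q HK Hq) as [h1 [h2 h3]]. rewrite h3.
  pose proof (COS_bound p). set (rho := sqrt (K/(q-1/2))) in *. 
  assert (0 <= k*rho*(1-cos p)) by (apply Rmult_le_pos; [apply Rmult_le_pos|]; lra).
  nra.
Qed.

Lemma HH_lb2 k K p q : K < 0 -> 0 < k -> q < 1/2 ->
  k^2 * (1 - (cos p)^2) - (k^2+2*K) <= HH k K p q.
Proof.
  intros HK Hk Hq. destruct (HH_rho k K p q HK Hq) as [h1 [h2 h3]]. rewrite h3.
  set (rho := sqrt (K/(q-1/2))) in *. pose proof (pow2_ge_0 (rho - k*cos p)). nra.
Qed.


Lemma sqrt_sq_pos x : 0 <= x -> sqrt (x^2) = x.
Proof. intros. rewrite <- Rsqr_pow2. apply sqrt_Rsqr; auto. Qed.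

Lemma box_facts A B k K : A^2+B^2 = k^2 + 2*K -> K < 0 -> 0 < k -> 0 < A^2+B^2 ->
  yb A B k K <= 0 /\ 0 <= yt A B k K /\ yt A B k K < 1/2 /\
  (forall p, 0 < HH k K p (yt A B k K)) /\ (forall p, 0 < HH k K p (yb A B k K)) /\
  (forall q, q < 1/2 -> 0 < HH k K (mm k K) q /\ 0 < HH k K (- mm k K) q) /\
  HH k K 0 0 < 0.
Proof.
  intros HR HK Hk H0.
  destruct (Rr_facts A B k K HR HK Hk H0) as [ER [Rp Rk]].
  set (Rq := Rr A B) in *.
  assert (Ht : K / (yt A B k K - 1/2) = (k+Rq+1)^2).
  { unfold yt. fold Rq. field. split; nra. }
  assert (Hb : K / (yb A B k K - 1/2) = ((k-Rq)/2)^2).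
  { unfold yb. fold Rq. field. split; [lra|]. intro E; ring_simplify in E; lra. }
  assert (ytlt : yt A B k K < 1/2).
  { unfold yt; fold Rq. assert (K / (k + Rq + 1)^2 < 0) by (apply Rdiv_neg_pos; [lra | unfold Rgt; apply pow_lt; lra]). lra. }
  assert (yblt : yb A B k K < 1/2).
  { unfold yb; fold Rq. assert (K / ((k - Rq)/2)^2 < 0) by (apply Rdiv_neg_pos; [lra | unfold Rgt; apply pow_lt; lra]). lra. }
  split; [|split; [|split; [auto|split; [|split; [|split]]]]].
  - unfold yb. fold Rq. 
    assert (K / ((k-Rq)/2)^2 <= -1/2).
    { apply Rmult_le_reg_r with (((k-Rq)/2)^2). nra. 
      replace (K / ((k - Rq) / 2) ^ 2 * ((k - Rq) / 2) ^ 2) with K by (field; lra). nra. }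
    lra.
  - unfold yt. fold Rq.
    assert (-1/2 <= K / (k+Rq+1)^2).
    { apply Rmult_le_reg_r with ((k+Rq+1)^2). nra. 
      replace (K / (k+Rq+1) ^ 2 * (k+Rq+1) ^ 2) with K by (field; lra). nra. }
    lra.
  - intro p. pose proof (HH_lb1 k K p (yt A B k K) HK Hk ytlt) as h.
    rewrite Ht, sqrt_sq_pos in h by lra. nra.
  - intro p. pose proof (HH_lb1 k K p (yb A B k K) HK Hk yblt) as h.
    rewrite Hb, sqrt_sq_pos in h by lra. nra.
  - intros q Hq. destruct (mm_facts k K HK Hk ltac:(lra)) as [_ [Hc He]].
    pose proof (HH_lb2 k K (mm k K) q HK Hk Hq) as h1.
    pose proof (HH_lb2 k K (- mm k K) q HK Hk Hq) as h2.
    rewrite cos_neg in h2. rewrite Hc in h1, h2. unfold ee in *.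
    assert (k^2 + 2*K = k^2*(1 - 2*(-K/k^2))) by (field; lra).
    split; nra.
  - destruct (HH_rho k K 0 0 HK ltac:(lra)) as [h1 [h2 h3]].
    rewrite h3, cos_0. set (r := sqrt (K / (0 - 1/2))) in *.
    assert (r^2 = -2*K) by (rewrite h2; field).
    assert (r < k) by nra. nra.
Qed.

Definition cl lo hi x := (lo + hi + Rabs (x - lo) - Rabs (x - hi)) / 2.

Lemma cl_spec lo hi x : lo <= hi ->
  lo <= cl lo hi x <= hi /\
  ((lo < x < hi /\ cl lo hi x = x) \/ cl lo hi x = lo \/ cl lo hi x = hi) /\
  (lo <= x <= hi -> cl lo hi x = x).
Proof.
  intros H. unfold cl.
  destruct (Rcase_abs (x - lo)) as [h1|h1]; [rewrite (Rabs_left _ h1)|rewrite (Rabs_right _ h1)];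
  destruct (Rcase_abs (x - hi)) as [h2|h2]; try rewrite (Rabs_left _ h2); try rewrite (Rabs_right _ h2);
  (split; [lra|split; [|intros; lra]]).
  - right; left; lra.
  - right; left; lra.
  - destruct (Req_dec x lo). right; left; lra. left; split; lra.
  - right; right; lra.
Qed.

Lemma cont_cl lo hi (g : R -> R) s : continuous g s -> continuous (fun y => cl lo hi (g y)) s.
Proof.
  intro Hg. unfold cl.
  apply continuous_ext with (fun y => (lo + hi + Rabs (g y - lo) - Rabs (g y - hi)) * / 2).
  intro; reflexivity.
  apply (continuous_mult (fun y => lo + hi + Rabs (g y - lo) - Rabs (g y - hi)) (fun _ => / 2)); [|apply continuous_const].
  apply (continuous_plus (fun y => lo + hi + Rabs (g y - lo)) (fun y => - Rabs (g y - hi))).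
  apply (continuous_plus (fun y => lo + hi) (fun y => Rabs (g y - lo))). apply continuous_const.
  apply continuous_Rabs_comp. apply (continuous_plus g (fun _ => - lo)); auto. apply continuous_const.
  apply (continuous_opp (fun y => Rabs (g y - hi))).
  apply continuous_Rabs_comp. apply (continuous_plus g (fun _ => - hi)); auto. apply continuous_const.
Qed.

Lemma cont_HH k K (f1 f2 : R -> R) s : continuous f1 s -> continuous f2 s -> f2 s < 1/2 ->
  continuous (fun y => HH k K (f1 y) (f2 y)) s.
Proof.
  intros H1 H2 H3. unfold HH.
  assert (Hw : continuous (fun y => K / (f2 y - 1/2)) s).
  { apply continuous_ext with (fun y => K * / (f2 y - 1/2)). intro; reflexivity.
    apply (continuous_mult (fun _ => K) (fun y => / (f2 y - 1/2))). apply continuous_const.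
    apply continuous_Rinv_comp. apply (continuous_plus f2 (fun _ => - (1/2))); auto. apply continuous_const.
    lra. }
  apply (continuous_plus (fun y => K / (f2 y - 1/2) - 2*k*sqrt (K/(f2 y - 1/2)) * cos (f1 y)) (fun _ => - (2*K)));
    [|apply continuous_const].
  apply (continuous_plus (fun y => K / (f2 y - 1/2)) (fun y => - (2*k*sqrt (K/(f2 y - 1/2)) * cos (f1 y)))); auto.
  apply (continuous_opp (fun y => 2*k*sqrt (K/(f2 y - 1/2)) * cos (f1 y))).
  apply (continuous_mult (fun y => 2*k*sqrt (K/(f2 y - 1/2))) (fun y => cos (f1 y))).
  apply (continuous_mult (fun _ => 2*k) (fun y => sqrt (K/(f2 y - 1/2)))). apply continuous_const.
  apply (continuous_comp (fun y => K/(f2 y - 1/2)) sqrt); auto. apply continuous_sqrt.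
  apply continuous_cos_comp; auto.
Qed.

Lemma PC_orbit a A B k K p q : A^2+B^2 = k^2 + 2*K -> K < 0 -> 0 < k -> 0 < A^2+B^2 ->
  qq a A B k K 0 = 0 -> - (PI/2) < a < PI/2 ->
  - (PI/2) < p < PI/2 -> q < 1/2 -> HH k K p q = 0 ->
  phase_orbit (xx a A B k K) (p, q).
Proof.
  intros HR HK Hk HR0 H0 Ha Hp Hq HH0.
  assert (HK' : K <> 0) by lra.
  destruct (HH_rho k K p q HK Hq) as [Hr1 [Hr2 Hr3]].
  set (rho := sqrt (K/(q-1/2))) in *.
  pose proof (cos_gt_0 p ltac:(lra) ltac:(lra)) as Hc.
  pose proof (sin2_cos2 p) as Hsc. unfold Rsqr in Hsc.
  destruct (solve_t A B (rho * cos p - k) (rho * sin p)) as [t [Hu Hn]]; auto.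
  { rewrite HR. nra. }
  exists t. rewrite Derive_xx by auto. f_equal.
  - rewrite (PC_atan a A B k K HR HK Hk H0 Ha t). rewrite Hu, Hn.
    replace (rho * sin p / (k + (rho * cos p - k))) with (tan p) by (unfold tan; field; nra).
    rewrite atan_tan; lra.
  - unfold vv. rewrite DD_eq, Hu, Hn.
    replace ((k + (rho * cos p - k)) ^ 2 + (rho * sin p) ^ 2) with (rho^2) by nra.
    rewrite Hr2. field. split; [lra|]. intro E. 
    assert (K/(q-1/2) = 0) by (unfold Rdiv; rewrite E; ring). lra.
Qed.

Lemma PC_surround a A B k K : A^2+B^2 = k^2 + 2*K -> K < 0 -> 0 < k -> 0 < A^2+B^2 ->
  qq a A B k K 0 = 0 -> - (PI/2) < a < PI/2 ->
  surrounds_origin (phase_orbit (xx a A B k K)).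
Proof.
  intros HR HK Hk HR0 H0 Ha.
  assert (HK' : K <> 0) by lra.
  destruct (box_facts A B k K HR HK Hk HR0) as [Hyb [Hyt [Hyt2 [Pt [Pb [Pm P00]]]]]].
  destruct (mm_facts k K HK Hk ltac:(lra)) as [Hm _].
  split.
  - intros [t Ht]. injection Ht as E1 E2. symmetry in E1, E2.
    rewrite Derive_xx in E2 by auto.
    rewrite (PC_atan a A B k K HR HK Hk H0 Ha t) in E1.
    pose proof (L_Dnpos A B k K t HR HK Hk) as HDn.
    assert (EN : NN A B t = 0).
    { assert (NN A B t / (k + uu A B t) = 0) by (rewrite <- (tan_atan (NN A B t / (k + uu A B t))), E1; apply tan_0).
      apply (Rmult_eq_reg_r (/ (k + uu A B t))). rewrite Rmult_0_l. exact H.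
      apply Rinv_neq_0_compat. lra. }
    pose proof (DD_pos A B k K t HR HK') as HD.
    assert (ED : DD A B k t = -2*K).
    { unfold vv in E2. assert (HKD : K / DD A B k t = -(1/2)) by lra.
      assert (K = -(1/2) * DD A B k t) by (rewrite <- HKD; field; lra). lra. }
    rewrite DD_eq, EN in ED. pose proof (uN_sq A B t) as Hu. rewrite EN in Hu.
    assert (uu A B t * (uu A B t + k) = 0) by nra.
    apply Rmult_integral in H. destruct H as [H|H]; [|lra].
    rewrite H in Hu. lra.
  - set (m := mm k K) in *. set (lo := yb A B k K) in *. set (hi := yt A B k K) in *.
    exists (m^2 + (hi - lo)^2 + 1).
    intros g1 g2 Hcont Hg1 Hg2 HM.
    set (h := fun s => HH k K (cl (-m) m (g1 s)) (cl lo hi (g2 s))).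
    assert (Hclp : forall s, - m <= cl (-m) m (g1 s) <= m) by (intro; apply cl_spec; lra).
    assert (Hclq : forall s, lo <= cl lo hi (g2 s) <= hi) by (intro; apply cl_spec; lra).
    assert (Hbd : forall s, h s <= 0 -> (-m < g1 s < m /\ cl (-m) m (g1 s) = g1 s) /\
                                         (lo < g2 s < hi /\ cl lo hi (g2 s) = g2 s)).
    { intros s Hs. unfold h in Hs.
      destruct (cl_spec (-m) m (g1 s) ltac:(lra)) as [_ [C1 _]].
      destruct (cl_spec lo hi (g2 s) ltac:(lra)) as [_ [C2 _]].
      pose proof (Hclq s).
      destruct C2 as [C2|[C2|C2]]; [| rewrite C2 in Hs; specialize (Pb (cl (-m) m (g1 s))); lra
                                     | rewrite C2 in Hs; specialize (Pt (cl (-m) m (g1 s))); lra].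
      destruct C1 as [C1|[C1|C1]]; [split; auto | |];
        rewrite C1 in Hs; destruct (Pm (cl lo hi (g2 s)) ltac:(lra)); lra. }
    destruct (Ranalysis5.IVT_interv h 0 1) as [s [Hs1 Hs2]].
    + intros y Hy. apply (proj2 (continuity_pt_filterlim _ _)).
      destruct (Hcont y Hy) as [C1 C2]. unfold h.
      apply (cont_HH k K (fun s => cl (-m) m (g1 s)) (fun s => cl lo hi (g2 s))).
      apply cont_cl; auto. apply cont_cl; auto. specialize (Hclq y). simpl. lra.
    + lra.
    + unfold h. rewrite Hg1, Hg2.
      destruct (cl_spec (-m) m 0 ltac:(lra)) as [_ [_ E1]].
      destruct (cl_spec lo hi 0 ltac:(lra)) as [_ [_ E2]].
      rewrite E1, E2 by lra. auto.
    + destruct (Rlt_le_dec 0 (h 1)) as [Hp|Hp]; auto.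
      destruct (Hbd 1%R Hp) as [[B1 _] [B2 _]]. exfalso.
      assert (g1 1 ^ 2 <= m^2) by nra. assert (g2 1 ^2 <= (hi - lo)^2) by nra. lra.
    + exists s. split; auto.
      destruct (Hbd s ltac:(lra)) as [[B1 E1] [B2 E2]].
      apply PC_orbit with (A:=A); auto; try lra.
      unfold h in Hs2. rewrite E1, E2 in Hs2. exact Hs2.
Qed.

Lemma cos_Zper x n : cos (x + 2 * PI * IZR n) = cos x.
Proof.
  destruct (Z_le_gt_dec 0 n) as [H|H].
  - rewrite <- (Z2Nat.id n) by lia. rewrite <- INR_IZR_INZ.
    replace (x + 2 * PI * INR (Z.to_nat n)) with (x + 2 * INR (Z.to_nat n) * PI) by ring.
    apply cos_period.
  - assert (E : n = (- Z.of_nat (Z.to_nat (- n)))%Z) by lia.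
    rewrite E, opp_IZR, <- INR_IZR_INZ.
    set (m := Z.to_nat (-n)). rewrite <- (cos_period (x + 2 * PI * - INR m) m). f_equal. ring.
Qed.

Lemma cos_eq_iff x y : cos x = cos y <-> exists n : Z, x = y + 2 * PI * IZR n \/ x = - y + 2 * PI * IZR n.
Proof.
  split.
  - intro H.
    set (p := (x+y)/2). set (q := (x-y)/2).
    assert (Ex : x = p + q) by (unfold p, q; field). assert (Ey : y = p - q) by (unfold p, q; field).
    rewrite Ex, Ey, cos_plus, cos_minus in H.
    assert (sin p * sin q = 0) by lra.
    apply Rmult_integral in H0. destruct H0 as [H0|H0].
    + destruct (sin_eq_0_0 p H0) as [n Hn]. exists n. right. 
      assert (x + y = 2 * PI * IZR n) by (replace (2*PI*IZR n) with (2*(IZR n * PI)) by ring; unfold p in Hn; lra). lra.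
    + destruct (sin_eq_0_0 q H0) as [n Hn]. exists n. left.
      assert (x - y = 2 * PI * IZR n) by (replace (2*PI*IZR n) with (2*(IZR n * PI)) by ring; unfold q in Hn; lra). lra.
  - intros [n [H|H]]; rewrite H, cos_Zper; auto. apply cos_neg.
Qed.

Definition ee_j (phi al : R) (j : Z) := - phi - al + 2 * al * IZR (j mod 2) + 2 * PI * IZR (j / 2).

Lemma ee_even phi al n : ee_j phi al (2*n) = - phi - al + 2 * PI * IZR n.
Proof.
  unfold ee_j. replace ((2*n) mod 2)%Z with 0%Z by (Z.to_euclidean_division_equations; lia). replace ((2*n)/2)%Z with n by (Z.to_euclidean_division_equations; lia). simpl. ring.
Qed.
Lemma ee_odd phi al n : ee_j phi al (2*n+1) = - phi + al + 2 * PI * IZR n.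
Proof.
  unfold ee_j. replace ((2*n+1) mod 2)%Z with 1%Z by (Z.to_euclidean_division_equations; lia). replace ((2*n+1)/2)%Z with n by (Z.to_euclidean_division_equations; lia). simpl. ring.
Qed.

Lemma ee_mono phi al i j : 0 < al < PI -> (i < j)%Z -> ee_j phi al i < ee_j phi al j.
Proof.
  intros Hal Hij. unfold ee_j.
  assert (H : ((i/2 + 1 <= j/2 /\ 0 <= i mod 2 <= 1 /\ 0 <= j mod 2 <= 1) \/ (i/2 = j/2 /\ i mod 2 = 0 /\ j mod 2 = 1))%Z).
  { Z.to_euclidean_division_equations; lia. }
  destruct H as [[H1 [H2 H3]]|[H1 [H2 H3]]].
  - apply IZR_le in H1. rewrite plus_IZR in H1.
    destruct H2 as [H2a H2b]. destruct H3 as [H3a H3b].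
    apply IZR_le in H2a. apply IZR_le in H2b. apply IZR_le in H3a. apply IZR_le in H3b.
    pose proof PI_RGT_0. simpl in *. nra.
  - rewrite H1, H2, H3. simpl. lra.
Qed.

Lemma ee_le phi al i j : 0 < al < PI -> (i <= j)%Z -> ee_j phi al i <= ee_j phi al j.
Proof.
  intros Hal Hij. destruct (Z.eq_dec i j). subst; lra. left. apply ee_mono; auto; lia.
Qed.

Lemma ee_cos phi al j : cos (ee_j phi al j + phi) = cos al.
Proof.
  unfold ee_j. assert (H : (j mod 2 = 0 \/ j mod 2 = 1)%Z) by (Z.to_euclidean_division_equations; lia).
  destruct H as [H|H]; rewrite H; simpl.
  - replace (- phi - al + 2 * al * 0 + 2 * PI * IZR (j / 2) + phi) with (- al + 2 * PI * IZR (j/2)) by ring.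
    rewrite cos_Zper. apply cos_neg.
  - replace (- phi - al + 2 * al * 1 + 2 * PI * IZR (j / 2) + phi) with (al + 2 * PI * IZR (j/2)) by ring.
    apply cos_Zper.
Qed.

Lemma root_enum_exists A B b : (2*(b-1))^2 < A^2+B^2 -> exists tj, root_enumeration A B b tj.
Proof.
  intro Hr. unfold root_enumeration.
  set (r := 2*(b-1)) in *.
  assert (HR0 : 0 < A^2+B^2) by nra.
  set (R := sqrt (A^2+B^2)).
  assert (ER : R^2 = A^2+B^2) by (unfold R; rewrite <- Rsqr_pow2; apply Rsqr_sqrt; lra).
  assert (Rp : 0 < R) by (apply sqrt_lt_R0; auto).
  destruct (unit_vec (B/R) (A/R)) as [phi [Hc Hs]].
  { replace ((B/R)^2 + (A/R)^2) with ((A^2+B^2)/R^2) by (field; lra). rewrite ER. field. lra. }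
  assert (Hrr : -1 < r/R < 1).
  { assert (r^2 < R^2) by lra. 
    split; [apply Rmult_lt_reg_r with R; auto; field_simplify; nra
           |apply Rmult_lt_reg_r with R; auto; field_simplify; nra]. }
  set (al := acos (r/R)).
  assert (Hal : 0 < al < PI) by (apply acos_bound_lt; lra).
  assert (Hcal : cos al = r/R) by (apply cos_acos; lra).
  assert (Hroot : forall t, B * cos t - A * sin t = r <-> cos (t + phi) = cos al).
  { intro t. rewrite Hcal, cos_plus, Hc, Hs.
    split; intro H.
    - rewrite <- H. field. lra.
    - apply (Rmult_eq_reg_r (/R)). 2: apply Rinv_neq_0_compat; lra.
      replace ((B * cos t - A * sin t) * / R) with (cos t * (B / R) - sin t * (A / R)) by (field; lra).
      rewrite H. field. lra. }
  set (e := ee_j phi al).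
  assert (He : forall t, B * cos t - A * sin t = r <-> exists j, t = e j).
  { intro t. rewrite Hroot. split.
    - intro H. apply cos_eq_iff in H. destruct H as [n [H|H]].
      + exists (2*n+1)%Z. unfold e. rewrite ee_odd. lra.
      + exists (2*n)%Z. unfold e. rewrite ee_even. lra.
    - intros [j Hj]. rewrite Hj. apply ee_cos. }
  assert (Hj0 : exists j0, 0 < e j0 /\ e (j0 - 1)%Z <= 0).
  { set (x := (phi + al) / (2*PI)).
    destruct (archimed x) as [A1 A2].
    set (n1 := up x) in *.
    pose proof PI_RGT_0.
    assert (E1 : 0 < e (2*n1)%Z).
    { unfold e. rewrite ee_even. unfold x in A1.
      assert (phi + al < 2*PI*IZR n1).
      { apply Rmult_lt_reg_r with (/ (2*PI)). apply Rinv_0_lt_compat; lra.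
        replace (2 * PI * IZR n1 * / (2 * PI)) with (IZR n1) by (field; lra). exact A1. }
      lra. }
    assert (E2 : e (2*n1 - 2)%Z <= 0).
    { unfold e. replace (2*n1-2)%Z with (2*(n1-1))%Z by lia. rewrite ee_even, minus_IZR.
      unfold x in A2.
      assert (2*PI*(IZR n1 - 1) <= phi + al).
      { apply Rmult_le_reg_r with (/ (2*PI)). apply Rinv_0_lt_compat; lra.
        replace (2 * PI * (IZR n1 - 1) * / (2 * PI)) with (IZR n1 - 1) by (field; lra). 
        unfold Rdiv in A2. lra. }
      lra. }
    destruct (Rle_lt_dec (e (2*n1 - 1)%Z) 0) as [E3|E3].
    - exists (2*n1)%Z. split; auto. replace (2*n1-1)%Z with (2*n1-1)%Z by lia. auto.
    - exists (2*n1-1)%Z. split; auto. replace (2*n1-1-1)%Z with (2*n1-2)%Z by lia. auto. }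
  destruct Hj0 as [j0 [Hj1 Hj2]].
  exists (fun j => e (j + j0)%Z).
  split; [|split; [|split]].
  - intros i j Hij. unfold e. apply ee_mono; auto. lia.
  - intro t. rewrite He. split.
    + intros [j Hj]. exists (j - j0)%Z. rewrite Hj. f_equal. lia.
    + intros [j Hj]. exists (j + j0)%Z. auto.
  - simpl. exact Hj1.
  - intros t Ht Htp. simpl. apply He in Ht. destruct Ht as [j Hj]. subst t.
    destruct (Z_le_gt_dec j0 j) as [H|H].
    + unfold e. apply ee_le; auto.
    + exfalso. assert (e j <= e (j0 - 1)%Z) by (unfold e; apply ee_le; auto; lia). lra.
Qed.

Lemma sign_change_pos (f df : R -> R) tau t1 t2 : (forall t, is_derive f t (df t)) -> f tau = 0 -> 0 < df tau ->
  t1 < tau < t2 -> (forall y, t1 < y < t2 -> y <> tau -> f y <> 0) ->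
  (forall s, t1 < s < tau -> f s < 0) /\ (forall s, tau < s < t2 -> 0 < f s).
Proof.
  intros Hd Hf0 Hl Ht Hnz.
  assert (Hc : forall x, continuous f x).
  { intro x. apply (ex_derive_continuous (K:=R_AbsRing) (V:=R_NormedModule)). eexists; apply Hd. }
  pose proof (proj1 (is_derive_Reals f tau (df tau)) (Hd tau)) as HL.
  destruct (HL (df tau / 2) ltac:(lra)) as [d Hdl].
  pose proof (cond_pos d) as dpos.
  set (h1 := Rmin (d/2) ((tau - t1)/2)).
  assert (Hh1 : 0 < h1 <= d/2 /\ h1 <= (tau-t1)/2).
  { unfold h1. split; [split|]. apply Rmin_glb_lt; lra. apply Rmin_l. apply Rmin_r. }
  set (h2 := Rmin (d/2) ((t2 - tau)/2)).
  assert (Hh2 : 0 < h2 <= d/2 /\ h2 <= (t2-tau)/2).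
  { unfold h2. split; [split|]. apply Rmin_glb_lt; lra. apply Rmin_l. apply Rmin_r. }
  assert (F1 : f (tau + - h1) < 0).
  { specialize (Hdl (- h1) ltac:(lra) ltac:(rewrite Rabs_Ropp, Rabs_right; lra)).
    rewrite Hf0 in Hdl. apply Rabs_lt_between in Hdl.
    assert (0 < f (tau + - h1) / - h1) by lra.
    assert (f (tau + - h1) = (f (tau + - h1) / - h1) * (- h1)) by (field; lra). nra. }
  assert (F2 : 0 < f (tau + h2)).
  { specialize (Hdl h2 ltac:(lra) ltac:(rewrite Rabs_right; lra)).
    rewrite Hf0 in Hdl. apply Rabs_lt_between in Hdl.
    assert (0 < (f (tau + h2) - 0) / h2) by lra.
    assert (f (tau + h2) = ((f (tau + h2) - 0) / h2) * h2) by (field; lra). nra. }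
  split.
  - intros s Hs. destruct (Rlt_le_dec (f s) 0) as [H|H]; auto. exfalso.
    destruct (IVT_gen_consistent f s (tau + - h1) 0 Hc) as [x [Hx1 Hx2]].
    { split. apply Rle_trans with (f (tau + - h1)); [apply Rmin_r|lra].
      apply Rle_trans with (f s); [lra|apply Rmax_l]. }
    assert (t1 < x < tau).
    { destruct Hx1 as [Hx1 Hx1']. split.
      - eapply Rlt_le_trans; [|exact Hx1]. apply Rmin_glb_lt; lra.
      - eapply Rle_lt_trans; [exact Hx1'|]. apply Rmax_lub_lt; lra. }
    apply (Hnz x); auto; lra.
  - intros s Hs. destruct (Rlt_le_dec 0 (f s)) as [H|H]; auto. exfalso.
    destruct (IVT_gen_consistent f s (tau + h2) 0 Hc) as [x [Hx1 Hx2]].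
    { split. apply Rle_trans with (f s); [apply Rmin_l|lra].
      apply Rle_trans with (f (tau + h2)); [lra|apply Rmax_r]. }
    assert (tau < x < t2).
    { destruct Hx1 as [Hx1 Hx1']. split.
      - eapply Rlt_le_trans; [|exact Hx1]. apply Rmin_glb_lt; lra.
      - eapply Rle_lt_trans; [exact Hx1'|]. apply Rmax_lub_lt; lra. }
    apply (Hnz x); auto; lra.
Qed.

Lemma sign_change (f df : R -> R) tau t1 t2 : (forall t, is_derive f t (df t)) -> f tau = 0 -> df tau <> 0 ->
  t1 < tau < t2 -> (forall y, t1 < y < t2 -> y <> tau -> f y <> 0) ->
  forall s s', t1 < s < tau -> tau < s' < t2 -> f s * f s' < 0.
Proof.
  intros Hd Hf0 Hl Ht Hnz s s' Hs Hs'.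
  destruct (Rlt_le_dec 0 (df tau)) as [H|H].
  - destruct (sign_change_pos f df tau t1 t2 Hd Hf0 H Ht Hnz) as [P1 P2].
    specialize (P1 s Hs). specialize (P2 s' Hs'). nra.
  - destruct (sign_change_pos (fun t => - f t) (fun t => - df t) tau t1 t2) as [P1 P2].
    + intro t. apply (is_derive_opp f). apply Hd.
    + rewrite Hf0; ring.
    + lra.
    + auto.
    + intros y Hy Hy' E. apply (Hnz y Hy Hy'). lra.
    + specialize (P1 s Hs). specialize (P2 s' Hs'). simpl in *. nra.
Qed.

Lemma enum_le A B b tj i j : root_enumeration A B b tj -> (i <= j)%Z -> tj i <= tj j.
Proof.
  intros [Hm _] H. destruct (Z.eq_dec i j). subst; lra. left. apply Hm. lia.
Qed.

Lemma enum_gap A B b tj j y : root_enumeration A B b tj -> tj (j-1)%Z < y < tj (j+1)%Z -> y <> tj j ->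
  B * cos y - A * sin y <> 2 * (b - 1).
Proof.
  intros He Hy Hne Hr. pose proof He as [Hm [Hroot _]].
  apply Hroot in Hr. destruct Hr as [i Hi]. subst y.
  destruct (Z_lt_le_dec i j) as [H|H].
  - pose proof (enum_le A B b tj i (j-1) He ltac:(lia)). lra.
  - destruct (Z.eq_dec i j). subst; auto.
    pose proof (enum_le A B b tj (j+1) i He ltac:(lia)). lra.
Qed.

Lemma enum_mid A B b tj j : root_enumeration A B b tj -> tj (j-1)%Z < tj j < tj (j+1)%Z.
Proof. intros [Hm _]. split; apply Hm; lia. Qed.

Lemma Dv1_iff a A B k K t : A^2+B^2 = k^2 + 2*K -> K <> 0 -> k <> 0 ->
  (Derive (xx a A B k K) t = 1 <-> k + uu A B t = 0).
Proof.
  intros HR HK Hk. rewrite Derive_xx by auto.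
  pose proof (L_1v A B k K t HR HK) as H. pose proof (DD_pos A B k K t HR HK).
  split; intro E.
  - rewrite E in H. assert (k * (k + uu A B t) = 0).
    { apply (Rmult_eq_reg_r (/ DD A B k t)). rewrite Rmult_0_l. unfold Rdiv in H. lra.
      apply Rinv_neq_0_compat; lra. }
    apply Rmult_integral in H1. destruct H1; auto. contradiction.
  - rewrite E in H. unfold Rdiv in H. rewrite Rmult_0_r, Rmult_0_l in H. lra.
Qed.

Lemma locally'_interval (P : R -> Prop) tau t1 t2 : t1 < tau < t2 ->
  (forall y, t1 < y < t2 -> y <> tau -> P y) -> Rbar_locally' (Finite tau) P.
Proof.
  intros Ht H. 
  assert (Hp : 0 < Rmin (tau - t1) (t2 - tau)) by (apply Rmin_glb_lt; lra).
  exists (mkposreal _ Hp). intros y Hy Hne. apply H; auto.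
  unfold ball in Hy; simpl in Hy; unfold AbsRing_ball, abs, minus, plus, opp in Hy; simpl in Hy.
  apply Rabs_lt_between in Hy.
  pose proof (Rmin_l (tau - t1) (t2 - tau)). pose proof (Rmin_r (tau - t1) (t2 - tau)). lra.
Qed.

Lemma IC_part a A B b k K : A^2+B^2 = k^2 + 2*K -> 0 < K -> k = 2*(1-b) -> k <> 0 ->
  qq a A B k K 0 = 0 ->
  forall tj, root_enumeration A B b tj ->
   (forall j : Z,
      (exists n : Z, xx a A B k K (tj j) = (2 * IZR n + 1) * (PI / 2)) /\
      Derive (xx a A B k K) (tj j) = 1) /\
   (forall j : Z,
      is_lim (ode_lhs (xx a A B k K)) (tj j) (- sin (xx a A B k K (tj j))) /\
      is_lim (energy (xx a A B k K)) (tj j) (2 * K / k^2)) /\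
   (forall t : R, Derive (xx a A B k K) t = 1 <-> exists j : Z, t = tj j) /\
   (forall (j : Z) (s s' : R),
      tj (j - 1)%Z < s < tj j -> tj j < s' < tj (j + 1)%Z ->
      (Derive (xx a A B k K) s - 1) * (Derive (xx a A B k K) s' - 1) < 0).
Proof.
  intros HR HK Hkb Hk H0 tj He.
  assert (HK' : K <> 0) by lra.
  assert (Hiff : forall t, B * cos t - A * sin t = 2 * (b - 1) <-> k + uu A B t = 0).
  { intro t. unfold uu. subst k. split; intro; lra. }
  pose proof He as [Hm [Hroot [_ _]]].
  assert (Hrt : forall j, k + uu A B (tj j) = 0).
  { intro j. apply Hiff, Hroot. exists j; auto. }
  assert (Hnr : forall j y, tj (j-1)%Z < y < tj (j+1)%Z -> y <> tj j -> Derive (xx a A B k K) y <> 1).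
  { intros j y Hy Hne E. apply (Dv1_iff a A B k K y HR HK' Hk) in E.
    apply (enum_gap A B b tj j y He Hy Hne). apply Hiff; auto. }
  split; [|split; [|split]].
  - intro j. split.
    + pose proof (L_cos0 a A B k K (tj j) HR HK' H0 (Hrt j)) as Hc.
      destruct (cos_eq_0_0 _ Hc) as [n Hn]. exists n. rewrite Hn. field.
    + apply (Dv1_iff a A B k K (tj j) HR HK' Hk). apply Hrt.
  - intro j. pose proof (enum_mid A B b tj j He) as Hmid. split.
    + apply is_lim_ext_loc with (fun y => - sin (xx a A B k K y)).
      * apply locally'_interval with (tj (j-1)%Z) (tj (j+1)%Z); auto.
        intros y Hy Hne. symmetry. apply (L_ode a A B k K y HR HK' H0). apply (Hnr j y Hy Hne).
      * apply (is_lim_continuity (fun y => - sin (xx a A B k K y)) (tj j)). apply (proj2 (continuity_pt_filterlim _ _)).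
        apply (continuous_opp (fun y => sin (xx a A B k K y))).
        apply (continuous_comp (xx a A B k K) sin). apply cont_xx; auto.
        apply (ex_derive_continuous (K:=R_AbsRing) (V:=R_NormedModule)). eexists; apply is_derive_sin.
    + apply is_lim_ext_loc with (fun _ => 2 * K / k^2).
      * apply locally'_interval with (tj (j-1)%Z) (tj (j+1)%Z); auto.
        intros y Hy Hne. symmetry. apply (L_energy a A B k K y HR HK' H0 Hk). apply (Hnr j y Hy Hne).
      * apply is_lim_const.
  - intro t. rewrite (Dv1_iff a A B k K t HR HK' Hk), <- Hiff. apply Hroot.
  - intros j s s' Hs Hs'. pose proof (enum_mid A B b tj j He) as Hmid.
    assert (Hsc : (k + uu A B s) * (k + uu A B s') < 0).
    { apply (sign_change (fun t => k + uu A B t) (fun t => - NN A B t) (tj j) (tj (j-1)%Z) (tj (j+1)%Z)); auto.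
      - intro t. apply is_derive_ext with (fun t => k + uu A B t). reflexivity.
        evar (l : R). replace (- NN A B t) with l. apply (is_derive_plus (fun _ => k) (uu A B)).
        apply is_derive_const. apply is_derive_uu. unfold l. simpl. unfold plus, zero; simpl. ring.
      - intro E. pose proof (DD_pos A B k K (tj j) HR HK') as HD.
        rewrite DD_eq, Hrt in HD. assert (NN A B (tj j) = 0) by lra. rewrite H in HD. lra.
      - intros y Hy Hne E. apply (Hnr j y Hy Hne). apply (Dv1_iff a A B k K y HR HK' Hk); auto. }
    rewrite !Derive_xx by auto.
    pose proof (L_1v A B k K s HR HK') as E1. pose proof (L_1v A B k K s' HR HK') as E2.
    pose proof (DD_pos A B k K s HR HK') as D1. pose proof (DD_pos A B k K s' HR HK') as D2.
    replace ((vv A B k K s - 1) * (vv A B k K s' - 1)) with ((1 - vv A B k K s) * (1 - vv A B k K s')) by ring.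
    rewrite E1, E2.
    replace (k * (k + uu A B s) / DD A B k s * (k * (k + uu A B s') / DD A B k s'))
      with ((k*k) * ((k + uu A B s) * (k + uu A B s')) * / (DD A B k s * DD A B k s')) by (field; lra).
    assert (0 < k*k) by nra.
    assert (0 < / (DD A B k s * DD A B k s')) by (apply Rinv_0_lt_compat; nra).
    assert (0 < k*k * / (DD A B k s * DD A B k s')) by nra.
    nra.
Qed.

Lemma IC_strip A B k K t : A^2+B^2 = k^2 + 2*K -> 0 < K -> k <> 0 ->
  sqrt (1 + 2*K/k^2) / (sqrt (1 + 2*K/k^2) + 1) <= vv A B k K t <=
  sqrt (1 + 2*K/k^2) / (sqrt (1 + 2*K/k^2) - 1).
Proof.
  intros HR HK Hk.
  set (S := sqrt (1 + 2*K/k^2)).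
  set (kap := Rabs k).
  assert (Hkap : 0 < kap) by (apply Rabs_pos_lt; auto).
  assert (Ek : k^2 = kap^2) by (unfold kap; rewrite <- Rsqr_pow2, <- Rsqr_pow2; apply Rsqr_abs).
  assert (Hc : 0 < 2*K/k^2) by (apply Rdiv_lt_0_compat; [lra| apply pow_lt; lra] || (apply Rdiv_lt_0_compat; nra)).
  assert (ES : S^2 = 1 + 2*K/k^2) by (unfold S; rewrite <- Rsqr_pow2; apply Rsqr_sqrt; lra).
  assert (S1 : 1 < S).
  { unfold S. rewrite <- sqrt_1 at 1. apply sqrt_lt_1; lra. }
  set (r := S * kap).
  assert (Er : r^2 = k^2 + 2*K).
  { unfold r. rewrite Rpow_mult_distr, ES, <- Ek. field. intro E. apply Hk. apply pow_eq_zero_ixx with 2%nat || nra. }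
  assert (HU := uu_bound A B t). rewrite HR, <- Er in HU.
  set (u := uu A B t) in *.
  assert (Hku : Rabs (k*u) <= kap * r).
  { rewrite Rabs_mult. fold kap. apply Rmult_le_compat_l. lra.
    apply Rsqr_le_abs_1 in HU || idtac. 
    assert (Rabs u ^2 <= r^2) by (rewrite <- Rsqr_pow2, <- Rsqr_abs, Rsqr_pow2; lra).
    assert (0 <= r) by (unfold r; nra). 
    pose proof (Rabs_pos u). nra. }
  apply Rabs_le_between in Hku.
  assert (HD : DD A B k t = r^2 + 2*k*u + kap^2) by (unfold DD; fold u; rewrite HR, <- Er, <- Ek; ring).
  assert (Hrk : kap < r) by (unfold r; nra).
  assert (D1 : (r - kap)^2 <= DD A B k t) by (rewrite HD; nra).
  assert (D2 : DD A B k t <= (r + kap)^2) by (rewrite HD; nra).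
  assert (Dp : 0 < (r - kap)^2) by (apply pow_lt; lra).
  assert (EK : K = (r^2 - kap^2)/2) by (rewrite Er, Ek; field).
  unfold vv. split.
  - assert (K / (r+kap)^2 <= K / DD A B k t).
    { unfold Rdiv. apply Rmult_le_compat_l. lra. apply Rinv_le_contravar; lra. }
    replace (S / (S + 1)) with (1/2 + K / (r+kap)^2). lra.
    rewrite EK. unfold r. field. repeat split; try lra; nra.
  - assert (K / DD A B k t <= K / (r-kap)^2).
    { unfold Rdiv. apply Rmult_le_compat_l. lra. apply Rinv_le_contravar; lra. }
    replace (S / (S - 1)) with (1/2 + K / (r-kap)^2). lra.
    rewrite EK. unfold r. field. repeat split; try lra; nra.
Qed.

Theorem mainTheorem1 :
  forall a b : R,
    Rabs a < PI / 2 -> b <> 1 / 2 -> b <> 1 -> 0 < Rabs a + Rabs b ->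
    let c := (2 * b - 1) * (cos a) ^ 2 / (1 - b) ^ 2 in
    let A := sin (2 * a) in
    let B := 2 * b - 1 + cos (2 * a) in
    exists x : R -> R,
      smooth x /\ x 0 = a /\ Derive x 0 = b /\
      (* explicit form of tan x *)
      (forall t : R, 2 * (1 - b) + B * cos t - A * sin t <> 0 ->
         cos (x t) <> 0 /\
         tan (x t) = (A * cos t + B * sin t) / (2 * (1 - b) + B * cos t - A * sin t)) /\
      (* explicit form of x' *)
      (forall t : R,
         Derive x t = 1 / 2 + 2 * (2 * b - 1) * (cos a) ^ 2 /
           (A ^ 2 + B ^ 2 + 4 * (1 - b) * (B * cos t - A * sin t) + 4 * (1 - b) ^ 2)) /\
      (* the differential equation at regular points (both forms) *)
      (forall t : R, cos (x t) <> 0 -> Derive x t <> 1 ->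
         is_derive (fun s => cos (x s) / (1 - Derive x s)) t (- sin (x t)) /\
         ode_lhs x t = - sin (x t)) /\
      (* conservation of energy away from singular points *)
      (forall t : R, Derive x t <> 1 -> energy x t = c) /\
      (* 1. *)
      (periodic x <-> b < 1 / 2) /\
      (b < 1 / 2 ->
         surrounds_origin (phase_orbit x) /\ symmetric_wrt_vaxis (phase_orbit x)) /\
      (* 2. *)
      (1 / 2 < b ->
         (exists tj : Z -> R, root_enumeration A B b tj) /\
         forall tj : Z -> R, root_enumeration A B b tj ->
           (forall j : Z,
              (exists k : Z, x (tj j) = (2 * IZR k + 1) * (PI / 2)) /\
              Derive x (tj j) = 1) /\
           (forall j : Z,
              is_lim (ode_lhs x) (tj j) (- sin (x (tj j))) /\
              is_lim (energy x) (tj j) c) /\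
           (forall t : R,
              sqrt (1 + c) / (sqrt (1 + c) + 1) <= Derive x t <=
              sqrt (1 + c) / (sqrt (1 + c) - 1)) /\
           (forall t : R, Derive x t = 1 <-> exists j : Z, t = tj j) /\
           (forall (j : Z) (s s' : R),
              tj (j - 1)%Z < s < tj j -> tj j < s' < tj (j + 1)%Z ->
              (Derive x s - 1) * (Derive x s' - 1) < 0)).
Proof.
  intros a b Ha Hb1 Hb2 Hab c A B.
  assert (Ha' : - (PI/2) < a < PI/2) by (apply Rabs_lt_between; auto).
  assert (Hca : 0 < cos a) by (apply cos_gt_0; lra).
  pose proof (sin2_cos2 a) as Hsc. unfold Rsqr in Hsc.
  assert (EA : A = 2 * sin a * cos a) by (unfold A; apply sin_2a).
  assert (EB : B = 2*b - 2 + 2 * cos a ^ 2) by (unfold B; rewrite cos_2a_cos; ring).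
  set (k := 2*(1-b)).
  set (K := 2*(2*b-1)*cos a^2).
  assert (HR : A^2+B^2 = k^2 + 2*K).
  { rewrite EA, EB. unfold k, K.
    replace (sin a ^ 2) with (1 - cos a ^2) by (simpl; lra).
    replace ((2 * sin a * cos a) ^ 2) with (4 * sin a ^ 2 * cos a ^ 2) by ring.
    replace (sin a ^ 2) with (1 - cos a ^2) by (simpl; lra). ring. }
  assert (Hb12 : 2*b - 1 <> 0) by lra.
  assert (Hk : k <> 0) by (unfold k; lra).
  assert (HK : K <> 0).
  { unfold K. apply Rmult_integral_contrapositive. split. lra. apply pow_nonzero. lra. }
  assert (H0 : qq a A B k K 0 = 0).
  { unfold qq. rewrite xx_0. unfold uu, NN. rewrite cos_0, sin_0. rewrite EA, EB. unfold k. ring. }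
  assert (Ec : c = 2 * K / k^2).
  { unfold c, K, k. field. lra. }
  assert (Hkuu : forall t, 2 * (1 - b) + B * cos t - A * sin t = k + uu A B t).
  { intro t. unfold uu, k. ring. }
  exists (xx a A B k K).
  split; [|split; [|split; [|split; [|split; [|split; [|split; [|split; [|split]]]]]]]].
  - intros n t. apply smooth_xx; auto.
  - apply xx_0.
  - rewrite Derive_xx by auto.
    assert (ED : DD A B k 0 = 4 * cos a ^2).
    { unfold DD, uu. rewrite cos_0, sin_0, EA, EB. unfold k.
      replace ((2 * sin a * cos a) ^ 2) with (4 * sin a ^ 2 * cos a ^ 2) by ring.
      replace (sin a ^ 2) with (1 - cos a ^2) by (simpl; lra). ring. }
    unfold vv. rewrite ED. unfold K. field.
    lra.
  - intros t Ht. rewrite Hkuu in *. apply L_tan; auto.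
  - intro t. rewrite Derive_xx by auto. unfold vv, DD, uu. unfold K, k. f_equal. f_equal. ring.
  - intros t Hc Hv. apply L_ode; auto.
  - intros t Hv. rewrite Ec. apply L_energy; auto.
  - split.
    + intros [T [HT Hper]]. destruct (Rlt_dec b (1/2)) as [h|h]; auto. exfalso.
      assert (HKp : 0 < K) by (unfold K; apply Rmult_lt_0_compat; [lra|apply pow_lt; lra]).
      pose proof (L_mono a A B k K 0 T HR HKp HT). rewrite Hper in H. lra.
    + intro h. exists (2*PI). split. pose proof PI_RGT_0; lra.
      intro t. apply L_period; auto.
      unfold K. assert (0 < cos a ^ 2) by (apply pow_lt; lra). nra.
      unfold k; lra.
  - intro h.
    assert (HKn : K < 0) by (unfold K; assert (0 < cos a ^ 2) by (apply pow_lt; lra); nra).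
    assert (Hkp : 0 < k) by (unfold k; lra).
    assert (HR0 : 0 < A^2 + B^2).
    { destruct (Req_dec (A^2+B^2) 0) as [E|E]; [|nra].
      exfalso. assert (A = 0) by nra. assert (B = 0) by nra.
      rewrite EA in H. assert (sin a = 0) by (apply Rmult_integral in H; destruct H; [|lra]; nra).
      assert (a = 0) by (rewrite <- (asin_sin a) by lra; rewrite H2; apply asin_0).
      assert (b = 0) by (rewrite EB in H1; assert (cos a ^2 = 1) by (simpl; nra); lra).
      subst. rewrite Rabs_R0 in Hab. lra. }
    split. apply PC_surround; auto. apply PC_sym; auto.
  - intro h.
    assert (HKp : 0 < K) by (unfold K; apply Rmult_lt_0_compat; [lra|apply pow_lt; lra]).
    split.
    + apply root_enum_exists. rewrite HR. unfold k. nra.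
    + intros tj He.
      destruct (IC_part a A B b k K HR HKp eq_refl Hk H0 tj He) as [P1 [P2 [P3 P4]]].
      split; [auto|split; [|split; [|split; auto]]].
      * rewrite Ec. auto.
      * intro t. rewrite Ec, Derive_xx by auto. apply IC_strip; auto.
Qed.
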